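(* Fix $d,m\geq1$ and smooth vector fields $f^0,\dots,f^m$ on $\mathbb{R}^d$. Let $\pi_d$ be an exotic forest. Then \[ F^{\mathrm{exo}}(\pi_d)=\sum_{d_0} F^{\mathrm{dec}}(\pi_{d_0}), \] where the sum runs over the equivalence classes of decorations $d_0$ of the underlying graph $\pi$ with $d\leq d_0$. Extending $F^{\mathrm{exo}}$ to all decorated forests by this same formula, the following Möbius inversion formula holds for every decorated forest $\pi_d$: \[ F^{\mathrm{dec}}(\pi_d)=\sum_{d\leq d_0}\mu(\pi_d,\pi_{d_0})F^{\mathrm{exo}}(\pi_{d_0}), \] where $\mu(\pi_{d_1},\pi_{d_1})=1$ and, for $d_1<d_2$, $\mu(\pi_{d_1},\pi_{d_2})=-\sum_{d_1\leq d<d_2}\mu(\pi_{d_1},\pi_d)$.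
   Context: A forest $\pi=(V,E)$ is a finite set $V$ of nodes with directed edges $E\subset V\times V$ (an edge $(v,w)$ makes $v$ a predecessor of $w$) such that each node has at most one outgoing edge and each connected component has exactly one node without outgoing edge (its root). A decoration is a map $d:V\to\mathbb{N}=\{0,1,2,\dots\}$ with $|d^{-1}(n)|$ even for all $n>0$. For decorations $d_1,d_2$ of the same graph, $d_2\leq d_1$ ($d_2$ finer than $d_1$) if there is $\alpha:\mathbb{N}\to\mathbb{N}$ with $\alpha(n)=0$ iff $n=0$ and $d_1=\alpha\circ d_2$; $d_1,d_2$ are equivalent if $d_1\leq d_2$ and $d_2\leq d_1$; $d_1<d_2$ means $d_1\leq d_2$ and not equivalent. Decorated forests are equivalence classes of decorated graphs under node bijections preserving edges and sending the decoration to an equivalent one; exotic forests are those with $|d^{-1}(n)|\in\{0,2\}$ for all $n>0$. For a decorated forest $\pi_d$ with roots $R$ and predecessor sets $\Pi(v)$, acting on smooth $\phi$: $F^{\mathrm{dec}}(\pi_d)[\phi](x)=\sum_{i_w\in\{1..d\},w\in V}\ \sum \phi_{I_R}(x)\prod_{v\in V}f^{p_{d(v)},i_v}_{I_{\Pi(v)}}(x)$, the inner sum over $p_n\in\{1,\dots,m\}$ for $n\in d(V)\setminus\{0\}$, pairwise distinct, with $p_0=0$; $F^{\mathrm{exo}}$ is defined by the same formula without the distinctness restriction. Here $f^{p,i}_{j_1\dots j_k}=\partial^k f^{p,i}/\partial x_{j_1}\cdots\partial x_{j_k}$, $\phi_{I_S}$ is the partial derivative of $\phi$ in the indices $i_w$,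 $w\in S$, and $F(\mathbf{1})[\phi]=\phi$ for the empty forest. *)

(* Defs.v *)
From HB Require Import structures.
From mathcomp Require Import all_boot all_order all_algebra.
From mathcomp Require Import all_classical all_reals all_analysis.
Set Implicit Arguments. Unset Strict Implicit. Unset Printing Implicit Defensive.
Import Order.TTheory GRing.Theory Num.Theory.
Import numFieldNormedType.Exports.
Local Open Scope ring_scope.

(* [par v = Some w] encodes the (unique) outgoing edge (v,w): v is a
   predecessor of w.  [par v = None] means v is a root. *)
Definition forest_edge (n : nat) (par : 'I_n -> option 'I_n) : rel 'I_n :=
  fun v w => (par v == Some w) || (par w == Some v).

Definition is_forest (n : nat) (par : 'I_n -> option 'I_n) : Prop :=
  forall v : 'I_n, exists! r : 'I_n,
    connect (forest_edge par) v r /\ par r = None.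

Definition roots (n : nat) (par : 'I_n -> option 'I_n) : seq 'I_n :=
  [seq v <- enum 'I_n | par v == None].

Definition preds (n : nat) (par : 'I_n -> option 'I_n) (v : 'I_n) : seq 'I_n :=
  [seq w <- enum 'I_n | par w == Some v].

Definition is_decoration (n : nat) (dc : 'I_n -> nat) : Prop :=
  forall k : nat, (0 < k)%N -> ~~ odd #|[set v | dc v == k]|.

Definition is_exotic (n : nat) (dc : 'I_n -> nat) : Prop :=
  is_decoration dc /\
  forall k : nat, (0 < k)%N -> #|[set v | dc v == k]| = 0%N \/ #|[set v | dc v == k]| = 2%N.

(* dec_le d2 d1 : d2 <= d1 (d2 finer than d1) *)
Definition dec_le (n : nat) (d2 d1 : 'I_n -> nat) : Prop :=
  exists alpha : nat -> nat,
    (forall k, alpha k = 0%N <-> k = 0%N) /\ (forall v, d1 v = alpha (d2 v)).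

Definition dec_equiv (n : nat) (d1 d2 : 'I_n -> nat) : Prop :=
  dec_le d1 d2 /\ dec_le d2 d1.

Definition dec_lt (n : nat) (d1 d2 : 'I_n -> nat) : Prop :=
  dec_le d1 d2 /\ ~ dec_equiv d1 d2.

(* Representatives of equivalence classes of decorations: the canonical
   labelling where a node with nonzero label gets (1 + position of the first
   node carrying the same label), and zero stays zero. Every class contains
   exactly one canonical labelling, with values in 'I_n.+1. *)
Definition canon (n : nat) (dc : 'I_n -> nat) (v : 'I_n) : nat :=
  if dc v == 0%N then 0%N else (find (fun w => dc w == dc v) (enum 'I_n)).+1.

Definition dnat (n : nat) (c : {ffun 'I_n -> 'I_n.+1}) : 'I_n -> nat :=
  fun v => nat_of_ord (c v).

Definition canon_rep (n : nat) (c : {ffun 'I_n -> 'I_n.+1}) : bool :=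
  [forall v, dnat c v == canon (dnat c) v].

Definition ebasis (R : realType) (d : nat) (j : 'I_d) : 'rV[R]_d :=
  delta_mx 0 j.

Definition pdiff (R : realType) (d : nat) (g : 'rV[R]_d -> R) (js : seq 'I_d)
  : 'rV[R]_d -> R :=
  foldr (fun j h => 'D_(ebasis R j) h) g js.

Definition smooth (R : realType) (d : nat) (g : 'rV[R]_d -> R) : Prop :=
  forall (js : seq 'I_d) (x : 'rV[R]_d), differentiable (pdiff g js) x.

Definition vcomp (R : realType) (d m : nat)
  (f : 'I_m.+1 -> 'rV[R]_d -> 'rV[R]_d) (p : 'I_m.+1) (i : 'I_d) : 'rV[R]_d -> R :=
  fun x => f p x ord0 i.

(* An assignment q : V -> {0..m} encodes q v = p_{dc(v)} (with p_0 = 0).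
   For F^dec the p_k (k in dc(V)\{0}) are pairwise distinct in {1..m};
   for F^exo they are arbitrary in {1..m}. *)
Definition compat_dec (n m : nat) (dc : 'I_n -> nat) (q : {ffun 'I_n -> 'I_m.+1}) : bool :=
  [forall v, (q v == ord0) == (dc v == 0%N)] &&
  [forall v, forall w, (q v == q w) == (dc v == dc w)].

Definition compat_exo (n m : nat) (dc : 'I_n -> nat) (q : {ffun 'I_n -> 'I_m.+1}) : bool :=
  [forall v, (q v == ord0) == (dc v == 0%N)] &&
  [forall v, forall w, (dc v == dc w) ==> (q v == q w)].

Definition Fterm (R : realType) (d m n : nat) (par : 'I_n -> option 'I_n)
  (f : 'I_m.+1 -> 'rV[R]_d -> 'rV[R]_d) (phi : 'rV[R]_d -> R)
  (i : {ffun 'I_n -> 'I_d}) (q : {ffun 'I_n -> 'I_m.+1}) (x : 'rV[R]_d) : R :=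
  pdiff phi [seq i w | w <- roots par] x *
  \prod_(v : 'I_n) pdiff (vcomp f (q v) (i v)) [seq i w | w <- preds par v] x.

Definition Fdec (R : realType) (d m n : nat) (par : 'I_n -> option 'I_n)
  (dc : 'I_n -> nat) (f : 'I_m.+1 -> 'rV[R]_d -> 'rV[R]_d) (phi : 'rV[R]_d -> R)
  (x : 'rV[R]_d) : R :=
  \sum_(i : {ffun 'I_n -> 'I_d})
    \sum_(q : {ffun 'I_n -> 'I_m.+1} | compat_dec dc q) Fterm par f phi i q x.

Definition Fexo (R : realType) (d m n : nat) (par : 'I_n -> option 'I_n)
  (dc : 'I_n -> nat) (f : 'I_m.+1 -> 'rV[R]_d -> 'rV[R]_d) (phi : 'rV[R]_d -> R)
  (x : 'rV[R]_d) : R :=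
  \sum_(i : {ffun 'I_n -> 'I_d})
    \sum_(q : {ffun 'I_n -> 'I_m.+1} | compat_exo dc q) Fterm par f phi i q x.

Definition Fexo_ext (R : realType) (d m n : nat) (par : 'I_n -> option 'I_n)
  (dc : 'I_n -> nat) (f : 'I_m.+1 -> 'rV[R]_d -> 'rV[R]_d) (phi : 'rV[R]_d -> R)
  (x : 'rV[R]_d) : R :=
  \sum_(c : {ffun 'I_n -> 'I_n.+1} |
          canon_rep c && `[< is_decoration (dnat c) /\ dec_le dc (dnat c) >])
    Fdec par (dnat c) f phi x.

(* Main.v *)
Require Import Defs.
From HB Require Import structures.
From mathcomp Require Import all_boot all_order all_algebra.
From mathcomp Require Import all_classical all_reals all_analysis.
Import Order.TTheory GRing.Theory Num.Theory.
Import numFieldNormedType.Exports.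
Local Open Scope ring_scope.

Set Implicit Arguments. Unset Strict Implicit. Unset Printing Implicit Defensive.
Local Notation canon := Defs.canon.
Section Comb.
Variable n : nat.
Implicit Types (a b c : 'I_n -> nat).

Definition lep a b : Prop :=
  (forall v, (a v == 0%N) = (b v == 0%N)) /\ (forall v w, a v = a w -> b v = b w).

Lemma lep_refl a : lep a a.
Proof. by split. Qed.

Lemma lep_trans a b c : lep a b -> lep b c -> lep a c.
Proof.
move=> [h1 h2] [k1 k2]; split=> [v|v w e]; first by rewrite h1 k1.
by apply: k2; apply: h2.
Qed.

Lemma lep_ext a b : a =1 b -> lep a b.
Proof. by move=> e; split=> [v|v w]; rewrite !e. Qed.

Lemma dec_leP a b : dec_le a b <-> lep a b.
Proof.
split.
  move=> [al [hal hb]]; split=> [v|v w e]; last by rewrite !hb e.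
  rewrite hb; apply/eqP/eqP => h; [exact/(proj2 (hal _)) | exact/(proj1 (hal _))].
move=> [h1 h2].
exists (fun k => if [pick v | a v == k] is Some v then b v else k).
split.
  move=> k; case: pickP => [v /eqP hv|_] //.
  rewrite -hv; split=> /eqP; [by rewrite -h1 => /eqP | by rewrite h1 => /eqP].
move=> v; case: pickP => [u /eqP hu|/(_ v)]; last by rewrite eqxx.
exact: h2.
Qed.

Lemma canon_lt a v : (canon a v < n.+1)%N.
Proof.
rewrite /canon; case: eqP => // _; rewrite ltnS.
rewrite -[X in (_ <= X)%N](size_enum_ord n) -has_find.
by apply/hasP; exists v; rewrite ?mem_enum.
Qed.

Lemma canon_eq0 a v : (canon a v == 0%N) = (a v == 0%N).
Proof. by rewrite /canon; case: ifP. Qed.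

Lemma canon_eqE a v w : (canon a v == canon a w) = (a v == a w).
Proof.
rewrite /canon.
have hh u : has (fun x => a x == a u) (enum 'I_n).
  by apply/hasP; exists u; rewrite ?mem_enum.
case: (a v =P 0%N) => [->|hv]; case: (a w =P 0%N) => [->|hw] //.
- by rewrite eq_sym; apply/esym/eqP => h; apply: hw.
- by apply/esym/eqP => h; apply: hv.
apply/eqP/eqP => [[e]|->] //.
have := nth_find v (hh v); have := nth_find v (hh w).
by rewrite e => /eqP -> /eqP.
Qed.

Lemma lep_canon a : lep a (canon a) /\ lep (canon a) a.
Proof.
split; split=> [v|v w]; rewrite ?canon_eq0 //.
  by move=> e; apply/eqP; rewrite canon_eqE e.
by move/eqP; rewrite canon_eqE => /eqP.
Qed.

Lemma canon_ext a b : lep a b -> lep b a -> canon a =1 canon b.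
Proof.
move=> [h1 h2] [k1 k2] v; rewrite /canon h1.
case: eqP => // _; congr S; apply: eq_find => w /=.
by apply/eqP/eqP => [/h2|/k2].
Qed.

Definition canonF a : {ffun 'I_n -> 'I_n.+1} := [ffun v => inord (canon a v)].

Lemma dnat_canonF a v : dnat (canonF a) v = canon a v.
Proof. by rewrite /dnat ffunE inordK // canon_lt. Qed.

Lemma canon_repP (c : {ffun 'I_n -> 'I_n.+1}) :
  canon_rep c -> forall v, dnat c v = canon (dnat c) v.
Proof. by move/forallP => h v; apply/eqP. Qed.

Lemma lep_canonF a : lep a (dnat (canonF a)) /\ lep (dnat (canonF a)) a.
Proof.
have [h1 h2] := lep_canon a.
split; [apply: lep_trans h1 _ | apply: lep_trans _ h2]; apply: lep_ext => v;
  by rewrite dnat_canonF.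
Qed.

Lemma canon_rep_canonF a : canon_rep (canonF a).
Proof.
apply/forallP => v; apply/eqP.
have [h1 h2] := lep_canonF a.
have [k1 k2] := lep_canon a.
rewrite dnat_canonF -(canon_ext h1 h2 v) (canon_ext k1 k2 v) //.
Qed.

Lemma canon_uniq (c c' : {ffun 'I_n -> 'I_n.+1}) :
  canon_rep c -> canon_rep c' -> lep (dnat c) (dnat c') -> lep (dnat c') (dnat c) ->
  c = c'.
Proof.
move=> hc hc' h1 h2; apply/ffunP => v; apply/val_inj.
change (dnat c v = dnat c' v).
by rewrite (canon_repP hc) (canon_repP hc') (canon_ext h1 h2).
Qed.

Lemma canonF_id (c : {ffun 'I_n -> 'I_n.+1}) : canon_rep c -> canonF (dnat c) = c.
Proof.
move=> hc; have [h1 h2] := lep_canonF (dnat c).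
by apply: canon_uniq => //; apply: canon_rep_canonF.
Qed.


Lemma canonF_ext a b : lep a b -> lep b a -> canonF a = canonF b.
Proof. by move=> h1 h2; apply/ffunP => v; rewrite !ffunE (canon_ext h1 h2). Qed.

Definition qnat m (q : {ffun 'I_n -> 'I_m.+1}) : 'I_n -> nat := fun v => nat_of_ord (q v).

Lemma qeq0 m (q : {ffun 'I_n -> 'I_m.+1}) v : (q v == ord0) = (qnat q v == 0%N).
Proof. by rewrite -val_eqE. Qed.

Lemma qeqE m (q : {ffun 'I_n -> 'I_m.+1}) v w : (q v == q w) = (qnat q v == qnat q w).
Proof. by rewrite -val_eqE. Qed.

Lemma compat_exoP m a (q : {ffun 'I_n -> 'I_m.+1}) :
  reflect (lep a (qnat q)) (compat_exo a q).
Proof.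
apply: (iffP andP) => [[/forallP h1 /forallP h2]|[h1 h2]].
  split=> [v|v w e]; first by rewrite -(eqP (h1 v)) qeq0.
  by move: (h2 v) => /forallP/(_ w); rewrite e eqxx /= qeqE => /eqP.
split; first by apply/forallP => v; rewrite qeq0 h1.
apply/forallP => v; apply/forallP => w; apply/implyP => /eqP e.
by rewrite qeqE (h2 _ _ e).
Qed.

Lemma compat_decP m a (q : {ffun 'I_n -> 'I_m.+1}) :
  reflect (lep a (qnat q) /\ lep (qnat q) a) (compat_dec a q).
Proof.
apply: (iffP andP) => [[/forallP h1 /forallP h2]|[[h1 h2] [k1 k2]]].
  have z v : (a v == 0%N) = (qnat q v == 0%N) by rewrite -(eqP (h1 v)) qeq0.
  split; split => [v|v w e] //.
    by move: (h2 v) => /forallP/(_ w)/eqP; rewrite e eqxx qeqE => /eqP.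
  by move: (h2 v) => /forallP/(_ w)/eqP; rewrite qeqE e eqxx => /esym/eqP.
split; first by apply/forallP => v; rewrite qeq0 h1.
apply/forallP => v; apply/forallP => w; rewrite qeqE.
by apply/eqP; apply/eqP/eqP => [/k2|/h2].
Qed.

Lemma card_sum (P : pred 'I_n) : #|[set v | P v]| = (\sum_v (P v : nat))%N.
Proof.
rewrite -sum1_card big_mkcond; apply: eq_bigr => v _.
by rewrite inE; case: (P v).
Qed.

Lemma dec_pres a b : is_decoration a -> lep a b -> is_decoration b.
Proof.
move=> ha /dec_leP [al [hal hb]] k k0.
pose N := (\max_v a v).+1.
have aN v : (a v < N)%N by rewrite ltnS; apply: (leq_bigmax (F := a)).
rewrite -dvdn2.
have -> : #|[set v | b v == k]| =
   (\sum_(j < N) \sum_(v : 'I_n) ((a v == j) && (al j == k) : nat))%N.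
  rewrite exchange_big /= card_sum; apply: eq_bigr => v _.
  rewrite (bigD1 (Ordinal (aN v))) //= eqxx /= big1 ?addn0 ?hb //.
  move=> j /negbTE hj; rewrite -val_eqE /= in hj.
  by rewrite eq_sym hj.
apply: dvdn_sum => j _.
case: (al j =P k) => e; last by rewrite big1 // => v _; rewrite andbF.
have j0 : (0 < j)%N.
  rewrite lt0n; apply/eqP => j0; move: k0; rewrite -e.
  by rewrite j0 (proj2 (hal 0%N) erefl).
under eq_bigr do rewrite andbT.
by rewrite -card_sum dvdn2; apply: ha.
Qed.

Lemma Fdec_eqv (R : realType) (d m : nat) (par : 'I_n -> option 'I_n) a b
  (f : 'I_m.+1 -> 'rV[R]_d -> 'rV[R]_d) phi x :
  lep a b -> lep b a -> Fdec par a f phi x = Fdec par b f phi x.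
Proof.
move=> hab hba; rewrite /Fdec; apply: eq_bigr => i _; apply: eq_bigl => q.
apply/compat_decP/compat_decP => [[h1 h2]|[h1 h2]]; split;
  by [apply: lep_trans hba h1 | apply: lep_trans h2 hab
     | apply: lep_trans hab h1 | apply: lep_trans h2 hba].
Qed.

End Comb.

Definition Pc n (a : 'I_n -> nat) (c : {ffun 'I_n -> 'I_n.+1}) : bool :=
  canon_rep c && `[< is_decoration (dnat c) /\ dec_le a (dnat c) >].

Arguments Pc n a c : simpl never.

Lemma PcP n a (c : {ffun 'I_n -> 'I_n.+1}) :
  reflect [/\ canon_rep c, is_decoration (dnat c) & lep a (dnat c)] (Pc a c).
Proof.
apply: (iffP andP) => [[h /asboolP [h1 /dec_leP h2]]|[h h1 h2]] //.
by split => //; apply/asboolP; split => //; apply/dec_leP.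
Qed.

Lemma Pc_canonF n a : is_decoration a -> Pc a (canonF (n:=n) a).
Proof.
move=> ha; have [h1 h2] := lep_canonF a.
by apply/PcP; split; [apply: canon_rep_canonF | apply: dec_pres ha h1 | ].
Qed.

Theorem mainTheorem4 (R : realType) (d m : nat) (hd : (0 < d)%N) (hm : (0 < m)%N)
  (f : 'I_m.+1 -> 'rV[R]_d -> 'rV[R]_d)
  (hf : forall (p : 'I_m.+1) (i : 'I_d), smooth (vcomp f p i))
  (n : nat) (par : 'I_n -> option 'I_n) (hpar : is_forest par) :
  (forall dc : 'I_n -> nat, is_exotic dc ->
     forall (phi : 'rV[R]_d -> R), smooth phi -> forall x : 'rV[R]_d,
       Fexo par dc f phi x = Fexo_ext par dc f phi x)
  /\
  (forall mu : ('I_n -> nat) -> ('I_n -> nat) -> R,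
     (forall d1 d2, is_decoration d1 -> is_decoration d2 ->
        dec_equiv d1 d2 -> mu d1 d2 = 1) ->
     (forall d1 d2, is_decoration d1 -> is_decoration d2 -> dec_lt d1 d2 ->
        mu d1 d2 = - \sum_(c : {ffun 'I_n -> 'I_n.+1} |
                         canon_rep c &&
                         `[< is_decoration (dnat c) /\ dec_le d1 (dnat c)
                             /\ dec_lt (dnat c) d2 >]) mu d1 (dnat c)) ->
     forall dc : 'I_n -> nat, is_decoration dc ->
     forall (phi : 'rV[R]_d -> R), smooth phi -> forall x : 'rV[R]_d,
       Fdec par dc f phi x =
       \sum_(c : {ffun 'I_n -> 'I_n.+1} |
               canon_rep c && `[< is_decoration (dnat c) /\ dec_le dc (dnat c) >])
         mu dc (dnat c) * Fexo_ext par (dnat c) f phi x).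
Proof.
split.
  move=> dc [hdc _] phi _ x.
  rewrite /Fexo_ext /Fexo /Fdec [in RHS]exchange_big /=; apply: eq_bigr => i _.
  rewrite (partition_big (fun q => canonF (qnat q)) (Pc dc)) /=; last first.
    move=> q /compat_exoP hq; have [h1 h2] := lep_canonF (qnat q).
    apply/PcP; split; first exact: canon_rep_canonF.
      exact: dec_pres hdc (lep_trans hq h1).
    exact: lep_trans hq h1.
  apply: eq_bigr => c /PcP [hc hdc' hle]; apply: eq_bigl => q.
  apply/andP/compat_decP => [[/compat_exoP hq /eqP <-]|[h1 h2]].
    by have [k1 k2] := lep_canonF (qnat q); split.
  split; first by apply/compat_exoP; apply: lep_trans hle h1.
  by apply/eqP; rewrite -(canonF_id hc); apply: canonF_ext.
move=> mu H1 H2 dc hdc phi _ x.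
rewrite /Fexo_ext.
under eq_bigr do rewrite big_distrr /=.
rewrite (exchange_big_dep (Pc dc)) /=; last first.
  move=> c c' /PcP [_ _ h1] /PcP [h2 h3 h4]; apply/PcP; split => //.
  exact: lep_trans h1 h4.
have [e1 e2] := lep_canonF dc.
rewrite (bigD1 (canonF dc)) /=; last exact: Pc_canonF.
rewrite [X in _ + X]big1 ?addr0.
  rewrite -big_distrl /= -(Fdec_eqv _ _ _ _ e1 e2).
  rewrite (bigD1 (canonF dc)) /=; last first.
    apply/andP; split; first exact: Pc_canonF.
    by apply/PcP; split; [apply: canon_rep_canonF | apply: dec_pres hdc e1 | apply: lep_refl].
  rewrite [X in _ + X]big1 ?addr0.
    rewrite H1 ?mul1r //; first by apply: dec_pres hdc e1.
    by split; apply/dec_leP.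
  move=> c /andP [/andP [/PcP [hc _ h1] /PcP [_ _ h2]] /eqP []].
  apply: canon_uniq => //; first exact: canon_rep_canonF.
  exact: lep_trans e2 h1.
move=> c' /andP [hc' hne].
have [hc'r hc'd hc'l] := elimT (PcP _ _) hc'.
rewrite -big_distrl /=.
suff -> : \sum_(c | Pc dc c && Pc (dnat c) c') mu dc (dnat c) = 0 by rewrite mul0r.
rewrite (bigD1 c') /=; last first.
  by apply/andP; split => //; apply/PcP; split => //; apply: lep_refl.
rewrite (H2 dc (dnat c')) //; last first.
  split; first by apply/dec_leP.
  move=> [_ /dec_leP h]; move/eqP: hne; apply.
  apply: canon_uniq => //; first exact: canon_rep_canonF.
    exact: lep_trans h e1.
  exact: lep_trans e2 hc'l.
rewrite addrC; apply/eqP; rewrite subr_eq0; apply/eqP; apply: eq_bigl => c.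
apply/andP/andP => [[/andP [/PcP [hc hcd hcl] /PcP [_ _ hcc']] hne']|[hc /asboolP [hcd [/dec_leP hcl [/dec_leP hcc' hneq]]]]].
  split => //; apply/asboolP; split => //; split; first by apply/dec_leP.
  split; first by apply/dec_leP.
  move=> [/dec_leP k1 /dec_leP k2]; move/eqP: hne'; apply.
  exact: canon_uniq.
split; first by apply/andP; split; apply/PcP.
apply/eqP => ecc; apply: hneq; rewrite ecc; split; apply/dec_leP; apply: lep_refl.
Qed.
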